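(* Let $\mathbf{P}_A,\mathbf{P}_B,\mathbf{Q}_A,\mathbf{Q}_B\in\mathbb{R}^{n\times n}$ be symmetric positive definite and for $\omega\in[0,1]$, $\bar\omega=1-\omega$, let $\mathbf{B}_{\mathrm{SCI}}(\omega)=\left(\omega(\mathbf{P}_A+\omega\mathbf{Q}_A)^{-1}+\bar\omega(\mathbf{P}_B+\bar\omega\mathbf{Q}_B)^{-1}\right)^{-1}$. Then the function $\omega\mapsto\operatorname{tr}(\mathbf{B}_{\mathrm{SCI}}(\omega))$ is convex on $[0,1]$. *)

(* Defs.v *)
From HB Require Import structures.
From mathcomp Require Import all_boot all_order all_algebra.
From mathcomp Require Import reals.
Set Implicit Arguments. Unset Strict Implicit. Unset Printing Implicit Defensive.
Import Order.TTheory GRing.Theory Num.Theory.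
Local Open Scope ring_scope.

Definition spd (R : realType) (n : nat) (A : 'M[R]_n) : Prop :=
  A^T = A /\ (forall v : 'cV[R]_n, v != 0 -> 0 < (v^T *m A *m v) 0 0).

Definition BSCI (R : realType) (n : nat) (PA PB QA QB : 'M[R]_n) (w : R)
  : 'M[R]_n :=
  invmx (w *: invmx (PA + w *: QA) + (1 - w) *: invmx (PB + (1 - w) *: QB)).

Definition convex_on_interval (R : realType) (a b : R) (f : R -> R) : Prop :=
  forall x y t : R, a <= x <= b -> a <= y <= b -> 0 <= t <= 1 ->
    f (t * x + (1 - t) * y) <= t * f x + (1 - t) * f y.

(* Main.v *)
Require Import Defs.
From HB Require Import structures.
From mathcomp Require Import all_boot all_order all_algebra.
From mathcomp Require Import reals.
From mathcomp Require Import ring lra.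
Import Order.TTheory GRing.Theory Num.Theory.
Local Open Scope ring_scope.

Module Aux.
Set Implicit Arguments. Unset Strict Implicit.
Section Form.
Variable R : realType.
Variable n : nat.
Implicit Types (A B : 'M[R]_n) (u v w : 'cV[R]_n).

Definition form A u w : R := (u^T *m A *m w) 0 0.

Lemma formDl A u1 u2 w : form A (u1 + u2) w = form A u1 w + form A u2 w.
Proof. by rewrite /form linearD /= !mulmxDl mxE. Qed.
Lemma formZl A c u w : form A (c *: u) w = c * form A u w.
Proof. by rewrite /form linearZ /= -!scalemxAl mxE. Qed.
Lemma formDr A u w1 w2 : form A u (w1 + w2) = form A u w1 + form A u w2.
Proof. by rewrite /form !mulmxDr mxE. Qed.
Lemma formZr A c u w : form A u (c *: w) = c * form A u w.
Proof. by rewrite /form -!scalemxAr mxE. Qed.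
Lemma formDm A B u w : form (A + B) u w = form A u w + form B u w.
Proof. by rewrite /form mulmxDr mulmxDl mxE. Qed.
Lemma formZm A c u w : form (c *: A) u w = c * form A u w.
Proof. by rewrite /form -scalemxAr -scalemxAl mxE. Qed.
Lemma form_tr A u w : form A^T u w = form A w u.
Proof.
by rewrite /form -[in LHS](trmxK w) -!trmx_mul mulmxA mxE.
Qed.
Lemma form0l A w : form A 0 w = 0.
Proof. by rewrite -(scale0r 0) formZl mul0r. Qed.
Lemma formBl A u1 u2 w : form A (u1 - u2) w = form A u1 w - form A u2 w.
Proof. by rewrite -scaleN1r formDl formZl mulN1r. Qed.
Lemma formBr A u w1 w2 : form A u (w1 - w2) = form A u w1 - form A u w2.
Proof. by rewrite -scaleN1r formDr formZr mulN1r. Qed.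
Lemma form_mul A B u w : form (A *m B) u w = form A u (B *m w).
Proof. by rewrite /form !mulmxA. Qed.
Lemma form1 u w : form 1%:M u w = (u^T *m w) 0 0.
Proof. by rewrite /form mulmx1. Qed.

Definition pd A := forall v, v != 0 -> 0 < form A v v.
Definition psd A := forall v, 0 <= form A v v.

Lemma pd_psd A : pd A -> psd A.
Proof.
move=> hA v; have [->|nz] := eqVneq v 0; first by rewrite form0l.
exact/ltW/hA.
Qed.

Lemma form_sym A u w : A^T = A -> form A u w = form A w u.
Proof. by move=> hA; rewrite -{1}hA form_tr. Qed.

Lemma pd_unit A : pd A -> A \in unitmx.
Proof.
move=> hA; rewrite -unitmx_tr -row_free_unit -kermx_eq0.
apply/negPn/negP => /matrix0Pn [i [j hij]].
set u := row i (kermx A^T).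
have hu : u *m A^T = 0 by rewrite /u -row_mul mulmx_ker row0.
have hv : A *m u^T = 0 by rewrite -(trmxK A) -trmx_mul hu trmx0.
have nz : u^T != 0.
  apply/negP => /eqP h; move: hij.
  have : u^T j 0 = 0 by rewrite h mxE.
  by rewrite !mxE => ->; rewrite eqxx.
have := hA _ nz; by rewrite /form -mulmxA hv mulmx0 mxE ltxx.
Qed.

Lemma formKinv K a x : K \in unitmx -> form K a (invmx K *m x) = form 1%:M a x.
Proof. by move=> hK; rewrite -form_mul mulmxV. Qed.

Lemma pd_inv A : pd A -> pd (invmx A).
Proof.
move=> hA v nz; have hU := pd_unit hA.
set g := invmx A *m v.
have gnz : g != 0.
  apply/negP => /eqP h; move/negP: nz; apply; apply/eqP.
  by rewrite -(mulKVmx hU v) -/g h mulmx0.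
have := hA _ gnz; rewrite {2}/g formKinv // form1 /g trmx_mul.
by rewrite -[(_ *m v) 0 0]/(form _ v v) form_tr.
Qed.

Lemma pd_comb A B a b : pd A -> pd B -> 0 <= a -> 0 <= b -> 0 < a + b ->
  pd (a *: A + b *: B).
Proof.
move=> hA hB ha hb hab v nz; rewrite formDm !formZm.
have h1 := hA v nz; have h2 := hB v nz.
have h3 := mulr_ge0 ha (ltW h1); have h4 := mulr_ge0 hb (ltW h2).
have [ha'|ha'] := ltrP 0 a; first by have := mulr_gt0 ha' h1; lra.
have hb' : 0 < b by lra.
by have := mulr_gt0 hb' h2; lra.
Qed.

Lemma pd_add A B c : pd A -> psd B -> 0 <= c -> pd (A + c *: B).
Proof.
move=> hA hB hc v nz; rewrite formDm formZm.
have := hA v nz; have := mulr_ge0 hc (hB v); lra.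
Qed.

Lemma psd_add A B c : psd A -> psd B -> 0 <= c -> psd (A + c *: B).
Proof.
move=> hA hB hc v; rewrite formDm formZm.
have := hA v; have := mulr_ge0 hc (hB v); lra.
Qed.

Lemma sym_add A B c : A^T = A -> B^T = B -> (A + c *: B)^T = A + c *: B.
Proof. by move=> hA hB; rewrite linearD linearZ /= hA hB. Qed.

Lemma formE2 A l m u w : A^T = A ->
  form A (l *: u + m *: w) (l *: u + m *: w) =
  l ^+ 2 * form A u u + 2 * l * m * form A u w + m ^+ 2 * form A w w.
Proof.
move=> hA; rewrite formDl !formDr !formZl !formZr (form_sym u w hA).
ring.
Qed.

Lemma trace_form A : \tr A = \sum_i form A (delta_mx i 0) (delta_mx i 0).
Proof.
apply: eq_bigr => i _.
by rewrite /form trmx_delta -rowE -colE !mxE.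
Qed.

End Form.
Section Part.
Variable R : realType.
Variable n : nat.
Variables P Q : 'M[R]_n.
Hypotheses (sP : P^T = P) (sQ : Q^T = Q) (pP : psd P) (pQ : psd Q).

Definition az (t x y : R) (a1 a2 : 'cV[R]_n) :=
  let z := t * x + (1 - t) * y in
  if z == 0 then 0 else z^-1 *: ((t * x) *: a1 + ((1 - t) * y) *: a2).

Lemma az_scale (t x y : R) a1 a2 : 0 <= t <= 1 -> 0 <= x <= 1 -> 0 <= y <= 1 ->
  (t * x + (1 - t) * y) *: az t x y a1 a2 = (t * x) *: a1 + ((1 - t) * y) *: a2.
Proof.
move=> ht hx hy; rewrite /az /=.
case: eqP => [hz|/eqP hz].
  have hp : 0 <= t * x by nra.
  have hq : 0 <= (1 - t) * y by nra.
  have -> : t * x = 0 by lra.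
  have -> : (1 - t) * y = 0 by lra.
  by rewrite !scale0r scaler0 addr0.
by rewrite scalerA mulfV // scale1r.
Qed.

Lemma partA (t x y : R) a1 a2 : 0 <= t <= 1 -> 0 <= x <= 1 -> 0 <= y <= 1 ->
  (t * x + (1 - t) * y) * form (P + (t * x + (1 - t) * y) *: Q) (az t x y a1 a2) (az t x y a1 a2) <=
  t * (x * form (P + x *: Q) a1 a1) + (1 - t) * (y * form (P + y *: Q) a2 a2).
Proof.
move=> /andP[ht0 ht1] /andP[hx0 hx1] /andP[hy0 hy1]; set z := t * x + (1 - t) * y.
have hp : 0 <= t * x by nra.
have hq : 0 <= (1 - t) * y by nra.
have h1 := mulr_ge0 hx0 (psd_add pP pQ hx0 a1).
have h2 := mulr_ge0 hy0 (psd_add pP pQ hy0 a2).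
have h1' := mulr_ge0 ht0 h1.
have h2' : 0 <= (1 - t) * (y * form (P + y *: Q) a2 a2) by apply: mulr_ge0 => //; lra.
rewrite /az -/z /=.
have [hz|hz] := eqVneq z 0.
  by rewrite hz mul0r; lra.
have zpos : 0 < z by rewrite lt0r hz /=; rewrite /z; nra.
set p := t * x; set q := (1 - t) * y.
set u := p *: a1 + q *: a2.
rewrite formZl formZr !formDm !formZm.
have e : forall EP EQ : R, z * (z^-1 * (z^-1 * (EP + z * EQ))) = z^-1 * EP + EQ.
  by move=> EP EQ; field.
rewrite e /u !formE2 //.
have d1 : 0 <= form P (1 *: a1 + (-1) *: a2) (1 *: a1 + (-1) *: a2) by apply: pP.
have d2 : 0 <= form Q (x *: a1 + (- y) *: a2) (x *: a1 + (- y) *: a2) by apply: pQ.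
rewrite formE2 // in d1.
rewrite formE2 // in d2.
have qa := pQ a1; have qb := pQ a2.
set A := form P a1 a1 in d1 *; set B := form P a2 a2 in d1 *; set C := form P a1 a2 in d1 *.
set A' := form Q a1 a1 in d2 qa *; set B' := form Q a2 a2 in d2 qb *; set C' := form Q a1 a2 in d2 *.
have d1' : 0 <= A - 2 * C + B.
  by move: d1; have -> : 1 ^+ 2 * A + 2 * 1 * -1 * C + (-1) ^+ 2 * B = A - 2 * C + B by ring.
have k1 : p ^+ 2 * A + 2 * p * q * C + q ^+ 2 * B <= z * (p * A + q * B).
  rewrite -subr_ge0.
  have -> : z * (p * A + q * B) - (p ^+ 2 * A + 2 * p * q * C + q ^+ 2 * B)
    = p * q * (A - 2 * C + B) by rewrite /z -/p -/q; ring.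
  exact: mulr_ge0 (mulr_ge0 hp hq) d1'.
have k1' : z^-1 * (p ^+ 2 * A + 2 * p * q * C + q ^+ 2 * B) <= p * A + q * B.
  by rewrite ler_pdivrMl.
have htt : 0 <= t * (1 - t) by apply: mulr_ge0; lra.
have k3 : p ^+ 2 * A' + 2 * p * q * C' + q ^+ 2 * B' <= t * (x * (x * A')) + (1 - t) * (y * (y * B')).
  rewrite -subr_ge0.
  have -> : t * (x * (x * A')) + (1 - t) * (y * (y * B')) - (p ^+ 2 * A' + 2 * p * q * C' + q ^+ 2 * B')
    = t * (1 - t) * (x ^+ 2 * A' + 2 * x * - y * C' + (- y) ^+ 2 * B') by rewrite /p /q; ring.
  exact: mulr_ge0 htt d2.
have -> : t * (x * (A + x * A')) + (1 - t) * (y * (B + y * B'))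
  = (p * A + q * B) + (t * (x * (x * A')) + (1 - t) * (y * (y * B'))) by rewrite /p /q; ring.
exact: lerD k1' k3.
Qed.
End Part.
Section Main.
Variable R : realType.
Variable n : nat.
Variables PA PB QA QB : 'M[R]_n.
Hypotheses (sPA : PA^T = PA) (sPB : PB^T = PB) (sQA : QA^T = QA) (sQB : QB^T = QB).
Hypotheses (pPA : pd PA) (pPB : pd PB) (pQA : pd QA) (pQB : pd QB).

Definition KA w := PA + w *: QA.
Definition KB w := PB + (1 - w) *: QB.
Definition MM w := w *: invmx (KA w) + (1 - w) *: invmx (KB w).
Definition HH w := invmx (MM w).
Definition Phi w a b := w * form (KA w) a a + (1 - w) * form (KB w) b b.

Lemma KA_pd w : 0 <= w -> pd (KA w).
Proof. by move=> hw; apply: pd_add => //; apply: pd_psd. Qed.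
Lemma KB_pd w : w <= 1 -> pd (KB w).
Proof. by move=> hw; apply: pd_add => //; [apply: pd_psd | lra]. Qed.
Lemma KA_sym w : (KA w)^T = KA w.
Proof. exact: sym_add. Qed.
Lemma KB_sym w : (KB w)^T = KB w.
Proof. exact: sym_add. Qed.

Lemma MM_unit w : 0 <= w <= 1 -> MM w \in unitmx.
Proof.
move=> /andP[h0 h1]; apply: pd_unit; apply: pd_comb; try lra.
- exact/pd_inv/KA_pd.
- exact/pd_inv/KB_pd.
Qed.

Lemma expand (K : 'M[R]_n) d a : K^T = K ->
  form K (d + a) (d + a) = form K d d + 2 * form K d a + form K a a.
Proof.
by move=> hK; rewrite formDl !formDr (form_sym d a hK); ring.
Qed.

Lemma opt_strong w v : 0 <= w <= 1 ->
  exists a0 b0, [/\ w *: a0 + (1 - w) *: b0 = v,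
    forall a, form (KA w) a a0 = form (1%:M : 'M[R]_n) a (HH w *m v),
    forall b, form (KB w) b b0 = form (1%:M : 'M[R]_n) b (HH w *m v) &
    form (HH w) v v = Phi w a0 b0].
Proof.
move=> hw; have /andP[h0 h1] := hw.
have uA : KA w \in unitmx by apply/pd_unit/KA_pd.
have uB : KB w \in unitmx by apply/pd_unit/KB_pd.
exists (invmx (KA w) *m (HH w *m v)), (invmx (KB w) *m (HH w *m v)).
have hs : w *: (invmx (KA w) *m (HH w *m v)) + (1 - w) *: (invmx (KB w) *m (HH w *m v)) = v.
  by rewrite !scalemxAl -mulmxDl mulmxA -/(MM w) /HH mulmxV ?mul1mx // MM_unit.
have fA : forall a, form (KA w) a (invmx (KA w) *m (HH w *m v)) = form (1%:M : 'M[R]_n) a (HH w *m v).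
  by move=> a; rewrite formKinv.
have fB : forall b, form (KB w) b (invmx (KB w) *m (HH w *m v)) = form (1%:M : 'M[R]_n) b (HH w *m v).
  by move=> b; rewrite formKinv.
split => //.
by rewrite /Phi fA fB -!formZl -formDl hs -form_mul mul1mx.
Qed.

Lemma opt w v : 0 <= w <= 1 -> exists a b, w *: a + (1 - w) *: b = v /\ form (HH w) v v = Phi w a b.
Proof. by move=> hw; have [a0 [b0 [? _ _ ?]]] := opt_strong v hw; exists a0, b0. Qed.

Lemma lb w v a b : 0 <= w <= 1 -> w *: a + (1 - w) *: b = v -> form (HH w) v v <= Phi w a b.
Proof.
move=> hw hv; have /andP[h0 h1] := hw.
have [a0 [b0 [hs fA fB e]]] := opt_strong v hw.
have hd : w *: (a - a0) + (1 - w) *: (b - b0) = 0.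
  have -> : w *: (a - a0) + (1 - w) *: (b - b0) = (w *: a + (1 - w) *: b) - (w *: a0 + (1 - w) *: b0).
    by rewrite !scalerBr opprD addrACA.
  by rewrite hv hs subrr.
have cr : w * form (1%:M : 'M[R]_n) (a - a0) (HH w *m v) + (1 - w) * form (1%:M : 'M[R]_n) (b - b0) (HH w *m v) = 0.
  by rewrite -!formZl -formDl hd form0l.
have pa := pd_psd (KA_pd h0) (a - a0).
have pb := pd_psd (KB_pd h1) (b - b0).
have pa' := mulr_ge0 h0 pa.
have pb' : 0 <= (1 - w) * form (KB w) (b - b0) (b - b0) by apply: mulr_ge0 => //; lra.
rewrite e /Phi -(subrK a0 a) -(subrK b0 b) (expand (a - a0) a0 (KA_sym w)).
rewrite (expand (b - b0) b0 (KB_sym w)) (fA (a - a0)) (fB (b - b0)).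
lra.
Qed.

Lemma key (x y t : R) v : 0 <= x <= 1 -> 0 <= y <= 1 -> 0 <= t <= 1 ->
  form (HH (t * x + (1 - t) * y)) v v <= t * form (HH x) v v + (1 - t) * form (HH y) v v.
Proof.
move=> hx hy ht.
have [a1 [b1 [hv1 e1]]] := opt v hx.
have [a2 [b2 [hv2 e2]]] := opt v hy.
have /andP[hx0 hx1] := hx; have /andP[hy0 hy1] := hy; have /andP[ht0 ht1] := ht.
have hx' : 0 <= 1 - x <= 1 by apply/andP; split; lra.
have hy' : 0 <= 1 - y <= 1 by apply/andP; split; lra.
set z := t * x + (1 - t) * y.
have hz : 0 <= z <= 1 by apply/andP; split; rewrite /z; nra.
have hz' : 1 - z = t * (1 - x) + (1 - t) * (1 - y) by rewrite /z; ring.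
have hcon : z *: az t x y a1 a2 + (1 - z) *: az t (1 - x) (1 - y) b1 b2 = v.
  rewrite hz' /z !az_scale //.
  transitivity (t *: (x *: a1 + (1 - x) *: b1) + (1 - t) *: (y *: a2 + (1 - y) *: b2)).
    by rewrite !scalerDr !scalerA addrACA.
  by rewrite hv1 hv2 -scalerDl addrC subrK scale1r.
apply: le_trans (lb hz hcon) _.
rewrite e1 e2 /Phi /KA /KB hz'.
have pA := partA sPA sQA (pd_psd pPA) (pd_psd pQA) a1 a2 ht hx hy.
have pB := partA sPB sQB (pd_psd pPB) (pd_psd pQB) b1 b2 ht hx' hy'.
rewrite -/z in pA.
lra.
Qed.

End Main.

Lemma lemma6_proof (R : realType) (n : nat) (PA PB QA QB : 'M[R]_n) :
  spd PA -> spd PB -> spd QA -> spd QB ->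
  convex_on_interval 0 1 (fun w : R => \tr (BSCI PA PB QA QB w)).
Proof.
move=> [sPA pPA] [sPB pPB] [sQA pQA] [sQB pQB] x y t hx hy ht.
rewrite !trace_form !mulr_sumr -big_split /=.
apply: ler_sum => i _.
exact: (key sPA sPB sQA sQB pPA pPB pQA pQB (delta_mx i 0) hx hy ht).
Qed.

End Aux.

Theorem lemma6 (R : realType) (n : nat) (PA PB QA QB : 'M[R]_n) :
  spd PA -> spd PB -> spd QA -> spd QB ->
  convex_on_interval 0 1 (fun w : R => \tr (BSCI PA PB QA QB w)).
Proof. exact: Aux.lemma6_proof. Qed.
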